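(* If $\mathbb V\in\mathrm{Rep}(Q,\mathbb{F}_1)$ is indecomposable, then every $\Phi=(\phi_i)_{i\in I}\in\mathrm{End}(\mathbb V)$ is either nilpotent or an isomorphism.
   Context: $\mathrm{Vect}_{\mathbb{F}_1}$: finite pointed sets $(V,0_V)$ with pointed maps injective on the complement of the preimage of the base point. $\mathrm{Rep}(Q,\mathbb{F}_1)$: representations $\mathbb V=(V_i,f_h)$ of a quiver $Q$ (vertices $I$, edges $E$) with $V_i\in\mathrm{Vect}_{\mathbb{F}_1}$ and $f_h:V_{h'}\to V_{h''}$ morphisms, morphisms being families of morphisms commuting with edge maps. Direct sums are taken vertexwise, where $V\oplus W$ is $V\sqcup W$ with base points identified. $\mathbb V$ is indecomposable if it is nonzero and cannot be written as $\mathbb U\oplus\mathbb W$ with $\mathbb U,\mathbb W\ne0$. An endomorphism $T$ of $V\in\mathrm{Vect}_{\mathbb{F}_1}$ is nilpotent if $T^n$ maps everything to $0_V$ for some $n$; $\Phi=(\phi_i)$ is nilpotent if every $\phi_i$ is nilpotent. *)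

(* Defs.v *)
From HB Require Import structures.
From mathcomp Require Import all_boot.
Set Implicit Arguments. Unset Strict Implicit. Unset Printing Implicit Defensive.

(* Objects of Vect_F1: finite pointed sets (V, 0_V). *)
Record pset := PSet { pcar :> finType; pt : pcar }.

Definition F1mor (V W : pset) (f : V -> W) : Prop :=
  f (pt V) = pt W /\ (forall x y : V, f x = f y -> f x <> pt W -> x = y).

Record quiver := Quiver { qI : finType; qE : finType;
                          qs : qE -> qI; qt : qE -> qI }.

Record prerep (Q : quiver) := PreRep {
  rV : qI Q -> pset;
  rf : forall h : qE Q, rV (qs h) -> rV (qt h) }.

Definition isrep (Q : quiver) (V : prerep Q) : Prop :=
  forall h : qE Q, F1mor (@rf Q V h).

Definition repmor (Q : quiver) (V W : prerep Q)
    (phi : forall i : qI Q, rV V i -> rV W i) : Prop :=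
  (forall i, F1mor (phi i)) /\
  (forall (h : qE Q) (x : rV V (qs h)),
      phi (qt h) (@rf Q V h x) = @rf Q W h (phi (qs h) x)).

Definition repiso (Q : quiver) (V W : prerep Q)
    (phi : forall i : qI Q, rV V i -> rV W i) : Prop :=
  repmor phi /\
  exists psi : forall i : qI Q, rV W i -> rV V i,
    repmor psi /\ (forall i, cancel (phi i) (psi i) /\ cancel (psi i) (phi i)).

Definition repzero (Q : quiver) (V : prerep Q) : Prop :=
  forall (i : qI Q) (x : rV V i), x = pt (rV V i).

(* Direct sum in Vect_F1: V ⊔ W with base points identified, realised as
   option (V \ {0} + W \ {0}) with base point None. *)
Definition nz (V : pset) := {x : V | x != pt V}.

Definition psum (U W : pset) : pset := @PSet (option (nz U + nz W)) None.

Definition psum_map (U W U' W' : pset) (f : U -> U') (g : W -> W')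
    (z : psum U W) : psum U' W' :=
  match z with
  | None => None
  | Some (inl x) => omap inl (insub (f (val x)) : option (nz U'))
  | Some (inr y) => omap inr (insub (g (val y)) : option (nz W'))
  end.

Definition dsum (Q : quiver) (U W : prerep Q) : prerep Q :=
  @PreRep Q (fun i => psum (rV U i) (rV W i))
    (fun h => psum_map (@rf Q U h) (@rf Q W h)).

Definition indecomposable (Q : quiver) (V : prerep Q) : Prop :=
  ~ repzero V /\
  ~ (exists (U W : prerep Q) (phi : forall i, rV V i -> rV (dsum U W) i),
        [/\ isrep U, isrep W, ~ repzero U, ~ repzero W & repiso phi]).

Definition nilpotent (V : pset) (T : V -> V) : Prop :=
  exists n : nat, forall x : V, iter n T x = pt V.

Definition rep_nilpotent (Q : quiver) (V : prerep Q)
    (phi : forall i : qI Q, rV V i -> rV V i) : Prop :=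
  forall i, nilpotent (phi i).

(* Main.v *)
From Stdlib Require Import ClassicalEpsilon Classical.
Require Import Defs.
From mathcomp Require Import all_boot.
Set Implicit Arguments. Unset Strict Implicit. Unset Printing Implicit Defensive.

Section Iter.
Variables (V : pset) (T : V -> V).
Hypothesis HT : F1mor T.

Lemma iter_pt n : iter n T (pt V) = pt V.
Proof. by elim: n => //= n ->; case: HT. Qed.

Lemma iterF1 n : F1mor (iter n T).
Proof.
elim: n => [|n [IH1 IH2]]; first by split.
split; first by rewrite /= IH1; case: HT.
move=> x y /= Exy Hne.
have [_ H2] := HT.
have E := H2 _ _ Exy Hne.
apply: IH2 => // E0; apply: Hne; by rewrite E0; case: HT.
Qed.

Lemma iter_mul k n x : iter k T x = x -> iter (k * n) T x = x.
Proof.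
move=> Hk; elim: n => [|n IH]; first by rewrite muln0.
by rewrite mulnS iterD IH Hk.
Qed.

Lemma dich x : (exists n, iter n T x = pt V) \/ (exists k, 0 < k /\ iter k T x = x).
Proof.
pose f (i : 'I_#|V|.+1) := iter i T x.
have : ~ injective f.
  move=> Hi; have := leq_card f Hi; by rewrite card_ord ltnn.
move=> Hni.
have [a [b [Eab Nab]]] : exists a b, f a = f b /\ a <> b.
  apply: NNPP => H; apply: Hni => a b E; apply: NNPP => N; apply: H; by exists a, b.
wlog lab : a b Eab Nab / a < b.
  move=> W; case: (ltngtP a b) => [l|l|e]; first exact: (W a b).
  - by apply: (W b a) => // e; apply: Nab.
  - by case: Nab; apply: val_inj.
case: (classic (iter a T x = pt V)) => Ha; first by left; exists a.
right; exists (b - a); split; first by rewrite subn_gt0.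
have [_ H2] := iterF1 a.
have lab' := ltnW lab.
apply: H2 => //; rewrite -iterD subnKC //.
by rewrite /f in Eab; rewrite -Eab.
Qed.

Lemma disj x : (exists n, iter n T x = pt V) -> (exists k, 0 < k /\ iter k T x = x) -> x = pt V.
Proof.
move=> [n Hn] [k [Hk Ek]].
rewrite -(iter_mul n Ek).
have le : n <= k * n by rewrite leq_pmull.
by rewrite -(subnK le) iterD Hn iter_pt.
Qed.

Lemma per_inj : (forall x, exists k, 0 < k /\ iter k T x = x) -> injective T.
Proof.
move=> Hp.
have Z : forall x, T x = pt V -> x = pt V.
  move=> x Hx; have [k [Hk Ek]] := Hp x.
  rewrite -Ek; case: k Hk Ek => // k _ _; by rewrite iterSr Hx iter_pt.
move=> x y E; case: (classic (T x = pt V)) => H.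
  have Hy : T y = pt V by rewrite -E.
  by rewrite (Z _ H) (Z _ Hy).
by case: HT => _ H2; apply: H2.
Qed.

Lemma nil_unif : (forall x, exists n, iter n T x = pt V) -> nilpotent T.
Proof.
move=> H.
have H' : forall x, exists n, iter n T x == pt V.
  by move=> x; have [n Hn] := H x; exists n; apply/eqP.
exists (\max_(x : V) xchoose (H' x)) => x.
have le := @leq_bigmax V (fun x => xchoose (H' x)) x.
rewrite -(subnK le) iterD (eqP (xchooseP (H' x))) iter_pt //.
Qed.
End Iter.

Definition subps (V : pset) (p : pred V) (hp : p (pt V)) : pset :=
  @PSet {x : V | p x} (exist _ (pt V) hp).

Definition toNZ (V : pset) (p : pred V) (hp : p (pt V)) (x : V)
  : option (nz (subps hp)) :=
  obind (fun u : subps hp => insub u) (insub x).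

Section Toz.
Variables (V : pset) (p : pred V) (hp : p (pt V)).
Lemma toNZ_val (a : nz (subps hp)) : toNZ hp (val (val a)) = Some a.
Proof. by rewrite /toNZ valK /= valK. Qed.
Lemma toNZ_spec x a : toNZ hp x = Some a -> val (val a) = x.
Proof.
rewrite /toNZ; case: insubP => [u _ <-|] //= .
by case: insubP => [v _ <- [<-]|].
Qed.
Lemma toNZ_notp x : ~~ p x -> toNZ hp x = None.
Proof. by move=> H; rewrite /toNZ insubF //; apply: negbTE. Qed.
Lemma toNZ_pt : toNZ hp (pt V) = None.
Proof. by rewrite /toNZ (insubT _ hp) /= insubF //= eqxx. Qed.
Lemma toNZ_none x : p x -> toNZ hp x = None -> x = pt V.
Proof.
move=> px; rewrite /toNZ (insubT _ px) /=.
case: (eqVneq x (pt V)) => // Hx.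
rewrite insubT //.
Qed.
End Toz.

Unset Implicit Arguments.
Section Split.
Variables (Q : quiver) (V : prerep Q).
Hypothesis HV : isrep V.
Variables (p : forall i, pred (rV V i)) (hp : forall i, p i (pt (rV V i))).
Hypothesis hs : forall h x, p (qs h) x -> p (qt h) (@rf Q V h x).

Definition srf (h : qE Q) (u : subps (hp (qs h))) : subps (hp (qt h)) :=
  insubd (pt (subps (hp (qt h)))) (@rf Q V h (val u)).

Definition subrep : prerep Q := @PreRep Q (fun i => subps (hp i)) srf.

Lemma val_srf h u : val (srf h u) = @rf Q V h (val u).
Proof. by rewrite /srf val_insubd (hs h _ (valP u)). Qed.

Arguments val_srf {h}.
Lemma subrep_isrep : isrep subrep.
Proof.
move=> h; split.
  apply: val_inj; rewrite /= val_srf /=; by case: (HV h).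
move=> x y E N; apply: val_inj; case: (HV h) => _ H2; apply: H2.
  by have := congr1 val E; rewrite /= !val_srf.
move=> E'; apply: N; apply: val_inj; by rewrite /= val_srf E'.
Qed.

Lemma subrep_nz : (exists i (x : rV V i), p i x /\ x <> pt _) -> ~ repzero subrep.
Proof.
move=> [i [x [px nx]]] Z; apply: nx.
by have := congr1 val (Z i (Sub x px : subps (hp i))).
Qed.
End Split.
Set Implicit Arguments.

Unset Implicit Arguments.
Section Split2.
Variables (Q : quiver) (V : prerep Q).
Hypothesis HV : isrep V.
Variables (p : forall i, pred (rV V i)) (hp : forall i, p i (pt (rV V i))).
Hypothesis hsp : forall h x, p (qs h) x -> p (qt h) (@rf Q V h x).
Variables (q : forall i, pred (rV V i)) (hq : forall i, q i (pt (rV V i))).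
Hypothesis hsq : forall h x, q (qs h) x -> q (qt h) (@rf Q V h x).
Hypothesis cover : forall i x, p i x || q i x.
Hypothesis dj : forall i x, p i x -> q i x -> x = pt (rV V i).

Let U := @subrep Q V p hp.
Let W := @subrep Q V q hq.

Definition chi i (z : rV (dsum U W) i) : rV V i :=
  match z with None => pt _ | Some (inl a) => val (val a) | Some (inr b) => val (val b) end.
Definition psi i (x : rV V i) : rV (dsum U W) i :=
  if toNZ (hp i) x is Some a then Some (inl a) else omap inr (toNZ (hq i) x).

Lemma psiK i : cancel (psi i) (chi i).
Proof.
move=> x; rewrite /psi; case E: toNZ => [a|]; first exact: toNZ_spec E.
case E2: toNZ => [b|]; first exact: toNZ_spec E2.
have := cover i x; case/orP => H; [exact: esym (toNZ_none H E)|exact: esym (toNZ_none H E2)].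
Qed.

Lemma chiK i : cancel (chi i) (psi i).
Proof.
case=> [[a|b]|]; rewrite /psi /=.
- by rewrite toNZ_val.
- have qb : q i (val (val b)) := valP (val b).
  have nb : val (val b) != pt _.
    by apply: contra (valP b) => /eqP E; apply/eqP; apply: val_inj.
  rewrite toNZ_notp ?toNZ_val //.
  by apply: contra nb => pb; apply/eqP; apply: dj.
- by rewrite (toNZ_pt (hp i)) (toNZ_pt (hq i)).
Qed.

Lemma chi_comm h z : chi (qt h) (@rf Q (dsum U W) h z) = @rf Q V h (chi (qs h) z).
Proof.
have P0 := fun h => proj1 (HV h).
case: z => [[a|b]|] /=; last by rewrite P0.
- case: insubP => [u _ Eu|] /=; first by rewrite Eu val_srf.
  move=> /negbNE /eqP E; have := congr1 val E; by rewrite val_srf.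
- case: insubP => [u _ Eu|] /=; first by rewrite Eu val_srf.
  move=> /negbNE /eqP E; have := congr1 val E; by rewrite val_srf.
Qed.

Lemma split_iso : repiso psi.
Proof.
have chi_mor : repmor chi.
  split; last exact: chi_comm.
  move=> i; split => // x y E _; exact: (can_inj (chiK i)).
split; last by exists chi; split => // i; split; [exact: psiK|exact: chiK].
split.
  move=> i; split; first by rewrite /psi (toNZ_pt (hp i)) (toNZ_pt (hq i)).
  move=> x y E _; exact: (can_inj (psiK i)).
move=> h x; apply: (can_inj (chiK (qt h))).
by rewrite chi_comm !psiK.
Qed.
End Split2.
Set Implicit Arguments.

Lemma indec_split (Q : quiver) (V : prerep Q) (HV : isrep V)
  (p : forall i, pred (rV V i)) (hp : forall i, p i (pt (rV V i)))
  (hsp : forall h x, p (qs h) x -> p (qt h) (@rf Q V h x))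
  (q : forall i, pred (rV V i)) (hq : forall i, q i (pt (rV V i)))
  (hsq : forall h x, q (qs h) x -> q (qt h) (@rf Q V h x))
  (cover : forall i x, p i x || q i x)
  (dj : forall i x, p i x -> q i x -> x = pt (rV V i)) :
  indecomposable V ->
  (forall i x, p i x -> x = pt (rV V i)) \/ (forall i x, q i x -> x = pt (rV V i)).
Proof.
move=> [_ ND].
have ex : forall r : forall i, pred (rV V i),
    ~ (forall i x, r i x -> x = pt (rV V i)) -> exists i (x : rV V i), r i x /\ x <> pt _.
  move=> r H; apply: NNPP => H'; apply: H => i x rx; apply: NNPP => nx.
  by apply: H'; exists i, x.
case: (classic (forall i x, p i x -> x = pt (rV V i))) => Hp; first by left.
right; apply: NNPP => Hq; apply: ND.
exists (subrep Q V p hp), (subrep Q V q hq), (psi Q V p hp q hq).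
split.
- exact: (subrep_isrep Q V HV p hp hsp).
- exact: (subrep_isrep Q V HV q hq hsq).
- exact: (subrep_nz Q V p hp (ex _ Hp)).
- exact: (subrep_nz Q V q hq (ex _ Hq)).
- exact: (split_iso Q V HV p hp hsp q hq hsq cover dj).
Qed.

Definition asb (P : Prop) : bool := if excluded_middle_informative P then true else false.
Lemma asbP P : reflect P (asb P).
Proof. rewrite /asb; case: excluded_middle_informative => H; by constructor. Qed.

Lemma iter_comm (Q : quiver) (V : prerep Q) (phi : forall i : qI Q, rV V i -> rV V i) :
  repmor phi -> forall h n x, iter n (phi (qt h)) (@rf Q V h x) = @rf Q V h (iter n (phi (qs h)) x).
Proof. by move=> [_ C] h n x; elim: n => //= n ->; rewrite C. Qed.

Theorem mainTheorem5 (Q : quiver) (V : prerep Q) :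
  isrep V -> indecomposable V ->
  forall phi : forall i : qI Q, rV V i -> rV V i,
    repmor phi -> rep_nilpotent phi \/ repiso phi.
Proof.
move=> HV HI phi Hphi.
have HF : forall i, F1mor (phi i) := proj1 Hphi.
pose p i (x : rV V i) := asb (exists n, iter n (phi i) x = pt (rV V i)).
pose q i (x : rV V i) := asb (exists k, 0 < k /\ iter k (phi i) x = x).
have hp : forall i, p i (pt (rV V i)) by move=> i; apply/asbP; exists 0.
have hq : forall i, q i (pt (rV V i)) by move=> i; apply/asbP; exists 1; split => //=; case: (HF i).
have hsp : forall h x, p (qs h) x -> p (qt h) (@rf Q V h x).
  move=> h x /asbP [n Hn]; apply/asbP; exists n.
  by rewrite iter_comm // Hn; case: (HV h).
have hsq : forall h x, q (qs h) x -> q (qt h) (@rf Q V h x).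
  move=> h x /asbP [k [Hk Ek]]; apply/asbP; exists k; split => //.
  by rewrite iter_comm // Ek.
have cover : forall i x, p i x || q i x.
  move=> i x; case: (dich (HF i) x) => H; apply/orP; [left|right]; exact/asbP.
have dj : forall i x, p i x -> q i x -> x = pt (rV V i).
  move=> i x H1 H2; move/asbP: H1 => H1; move/asbP: H2 => H2; exact: (disj (HF i) H1 H2).
case: (indec_split HV hp hsp hq hsq cover dj HI) => [Z|Z].
- right.
  have Hinj : forall i, injective (phi i).
    move=> i; apply: per_inj (HF i) _ => x.
    have := cover i x; case/orP => [/Z -> |/asbP //].
    by exists 1; split => //=; case: (HF i).
  pose g i := finv (phi i).
  have gK : forall i, cancel (phi i) (g i) := fun i => finv_f (Hinj i).
  have Kg : forall i, cancel (g i) (phi i) := fun i => f_finv (Hinj i).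
  split => //; exists g; split => //; split.
  + move=> i; split.
      by apply: (Hinj i); rewrite Kg; case: (HF i).
    by move=> x y E _; exact: (can_inj (Kg i)).
  + move=> h x; apply: (Hinj (qt h)).
    by rewrite Kg (proj2 Hphi) Kg.
- left => i; apply: nil_unif (HF i) _ => x.
  have := cover i x; case/orP => [/asbP //|/Z ->].
  by exists 0.
Qed.
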